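(* Let $X$ be a topological space, $Y$ a topological space, $(Z,d)$ a metric space and $f:X\times Y\to Z$ a mapping. (a) If $Y$ has a countable base and, for each $x\in X$, $f_x$ is continuous and there is a dense set $D_x\subset Y$ such that $f^y$ is quasicontinuous at $x$ for every $y\in D_x$, then there is a residual set $R\subset X$ such that $f$ is continuous at every point of $R\times Y$. (b) If $Y$ has a countable pseudobase and, for each $x\in X$, $f_x$ is quasicontinuous and there is a dense set $D_x\subset Y$ such that $f^y$ is quasicontinuous at $x$ for every $y\in D_x$, then there is a residual set $R\subset X$ such that $f$ is quasicontinuous with respect to the variable $x$ at every point of $R\times Y$.
   Context: $f_x(y)=f^y(x)=f(x,y)$. A mapping $g$ is quasicontinuous at $a$ if for each neighborhood $U$ of $a$ and neighborhood $W$ of $g(a)$ there is an open $O$ with $\emptyset\ne O\subset U$ and $g(O)\subset W$; quasicontinuous means at every point. $f$ is quasicontinuous with respect to the variable $x$ at $(a,b)$ if for each neighborhood $V$ of $b$ and $\varepsilon>0$ there are a neighborhood $U$ of $a$ and an open $O\subset Y$ with $\emptyset\ne O\subset V$ and $d(f(a,b),f(x,y))\le\varepsilon$ for all $x\in U$, $y\in O$. A pseudobase of $Y$ is a collection of nonempty open sets such that every nonempty open set contains one of them. Residual means containing a countable intersection of dense open sets. *)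

(* Defs.v *)
From Stdlib Require Import Reals.
Open Scope R_scope.

Record TopSpace := {
  tcar :> Type;
  topen : (tcar -> Prop) -> Prop;
  topen_full : topen (fun _ => True);
  topen_empty : topen (fun _ => False);
  topen_inter : forall A B, topen A -> topen B -> topen (fun x => A x /\ B x);
  topen_union : forall (F : (tcar -> Prop) -> Prop),
      (forall A, F A -> topen A) -> topen (fun x => exists A, F A /\ A x)
}.

Record MetricSpace := {
  mcar :> Type;
  mdist : mcar -> mcar -> R;
  mdist_nonneg : forall x y, 0 <= mdist x y;
  mdist_eq0 : forall x y, mdist x y = 0 <-> x = y;
  mdist_sym : forall x y, mdist x y = mdist y x;
  mdist_tri : forall x y z, mdist x z <= mdist x y + mdist y z
}.

Definition nbhd {X : TopSpace} (N : X -> Prop) (a : X) : Prop :=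
  exists O, topen X O /\ O a /\ (forall x, O x -> N x).

Definition mnbhd {Z : MetricSpace} (W : Z -> Prop) (z : Z) : Prop :=
  exists eps, eps > 0 /\ (forall w, mdist Z z w < eps -> W w).

Definition pnbhd {X Y : TopSpace} (N : X * Y -> Prop) (p : X * Y) : Prop :=
  exists U V, nbhd U (fst p) /\ nbhd V (snd p) /\
    (forall x y, U x -> V y -> N (x, y)).

Definition continuous_at2 {X Y : TopSpace} {Z : MetricSpace}
  (f : X * Y -> Z) (p : X * Y) : Prop :=
  forall W, mnbhd W (f p) -> exists N, pnbhd N p /\ (forall q, N q -> W (f q)).

Definition quasicontinuous_at {X : TopSpace} {Z : MetricSpace}
  (g : X -> Z) (a : X) : Prop :=
  forall U W, nbhd U a -> mnbhd W (g a) ->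
    exists O, topen X O /\ (exists x, O x) /\
      (forall x, O x -> U x) /\ (forall x, O x -> W (g x)).

Definition quasicontinuous {X : TopSpace} {Z : MetricSpace} (g : X -> Z) : Prop :=
  forall a, quasicontinuous_at g a.

Definition continuous {X : TopSpace} {Z : MetricSpace} (g : X -> Z) : Prop :=
  forall a W, mnbhd W (g a) -> exists U, nbhd U a /\ (forall x, U x -> W (g x)).

Definition qc_wrt_x_at {X Y : TopSpace} {Z : MetricSpace}
  (f : X * Y -> Z) (a : X) (b : Y) : Prop :=
  forall V eps, nbhd V b -> eps > 0 ->
    exists U O, nbhd U a /\ topen Y O /\ (exists y, O y) /\
      (forall y, O y -> V y) /\
      (forall x y, U x -> O y -> mdist Z (f (a, b)) (f (x, y)) <= eps).

Definition dense {X : TopSpace} (D : X -> Prop) : Prop :=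
  forall O, topen X O -> (exists x, O x) -> exists x, O x /\ D x.

Definition residual {X : TopSpace} (R0 : X -> Prop) : Prop :=
  exists G : nat -> (X -> Prop),
    (forall n, topen X (G n) /\ dense (G n)) /\
    (forall x, (forall n, G n x) -> R0 x).

Definition countable_coll {T : Type} (P : (T -> Prop) -> Prop) : Prop :=
  exists e : nat -> option (T -> Prop),
    forall S, P S <-> exists n, e n = Some S.

Definition is_base {Y : TopSpace} (B : (Y -> Prop) -> Prop) : Prop :=
  (forall S, B S -> topen Y S) /\
  (forall O y, topen Y O -> O y -> exists S, B S /\ S y /\ (forall z, S z -> O z)).

Definition is_pseudobase {Y : TopSpace} (B : (Y -> Prop) -> Prop) : Prop :=
  (forall S, B S -> topen Y S /\ exists y, S y) /\
  (forall O, topen Y O -> (exists y, O y) ->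
     exists S, B S /\ (forall z, S z -> O z)).

Definition countable_base (Y : TopSpace) : Prop :=
  exists B : (Y -> Prop) -> Prop, is_base B /\ countable_coll B.

Definition countable_pseudobase (Y : TopSpace) : Prop :=
  exists B : (Y -> Prop) -> Prop, is_pseudobase B /\ countable_coll B.

(* Main.v *)
Require Import Defs.
From Stdlib Require Import Reals Lra Classical Cantor.
Open Scope R_scope.

Definition Qset {X Y : TopSpace} {Z : MetricSpace} (f : X * Y -> Z)
  (B : Y -> Prop) (e : R) (x : X) : Prop :=
  (forall v v', B v -> B v' -> mdist Z (f (x,v)) (f (x,v')) < e) /\
  (forall U, nbhd U x -> exists u u' v v', U u /\ U u' /\ B v /\ B v' /\
      mdist Z (f (u,v)) (f (u',v')) > 12*e).

Lemma open_nbhd {X : TopSpace} (O : X -> Prop) x : topen X O -> O x -> nbhd O x.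
Proof. intros H1 H2; exists O; auto. Qed.

Lemma ball_mnbhd {Z : MetricSpace} (z : Z) e : e > 0 -> mnbhd (fun w => mdist Z z w < e) z.
Proof. intros; exists e; auto. Qed.

Lemma cont_qc {X : TopSpace} {Z : MetricSpace} (g : X -> Z) : continuous g -> quasicontinuous g.
Proof.
  intros Hc a U W [O1 [HO1 [HaO1 HO1U]]] HW.
  destruct (Hc a W HW) as [U' [[O2 [HO2 [HaO2 HO2U]]] HU'W]].
  exists (fun x => O1 x /\ O2 x); split; [apply topen_inter; auto|].
  split; [exists a; auto|]. split; intros x [h1 h2]; auto.
Qed.

Section NW.
Context {X Y : TopSpace} {Z : MetricSpace} (f : X * Y -> Z).
Hypothesis H : forall x : X,
      quasicontinuous (fun y : Y => f (x, y)) /\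
      exists D : Y -> Prop, dense D /\
        forall y, D y -> quasicontinuous_at (fun x' : X => f (x', y)) x.

Lemma sub_step (B : Y -> Prop) (e : R) (He : e > 0) (HB : topen Y B)
  (O1 : X -> Prop) (HO1 : topen X O1) (x0 : X) (y' : Y) (By' : B y')
  (Hy' : forall u, O1 u -> mdist Z (f (x0,y')) (f (u,y')) < e)
  (w : X) (z : Y) (Hw : O1 w) (Bz : B z)
  (Hd : mdist Z (f (w,z)) (f (w,y')) > 5*e) :
  exists O', topen X O' /\ (exists x, O' x) /\ (forall x, O' x -> O1 x) /\
     (forall x, O' x -> ~ Qset f B e x).
Proof.
  destruct (H w) as [Hqw [Dw [HDw Hqcw]]].
  destruct (Hqw z B _ (open_nbhd B z HB Bz) (ball_mnbhd (f (w,z)) e He))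
    as [O'' [HO'' [[t0 Ht0] [HO''B HO''W]]]].
  destruct (HDw O'' HO'' (ex_intro _ t0 Ht0)) as [y'' [Hy''O Hy''D]].
  destruct (Hqcw y'' Hy''D O1 _ (open_nbhd O1 w HO1 Hw) (ball_mnbhd (f (w,y'')) e He))
    as [O2 [HO2 [Hne [HO2O1 HO2W]]]].
  exists O2; split; [auto|]; split; [auto|]; split; [auto|].
  intros t Ht [Q1 _].
  pose proof (Q1 y'' y' (HO''B _ Hy''O) By') as a1.
  pose proof (HO''W _ Hy''O) as a2; simpl in a2.
  pose proof (HO2W _ Ht) as a3; simpl in a3.
  pose proof (Hy' t (HO2O1 _ Ht)) as a4.
  pose proof (Hy' w Hw) as a5.
  pose proof (mdist_tri Z (f (w,z)) (f (w,y'')) (f (w,y'))) as t1.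
  pose proof (mdist_tri Z (f (w,y'')) (f (t,y'')) (f (w,y'))) as t2.
  pose proof (mdist_tri Z (f (t,y'')) (f (t,y')) (f (w,y'))) as t3.
  pose proof (mdist_tri Z (f (t,y')) (f (x0,y')) (f (w,y'))) as t4.
  rewrite (mdist_sym Z (f (t,y')) (f (x0,y'))) in t4.
  lra.
Qed.

Lemma nowhere (B : Y -> Prop) (e : R) (He : e > 0) (HB : topen Y B) :
  forall O, topen X O -> (exists x, O x) ->
  exists O', topen X O' /\ (exists x, O' x) /\ (forall x, O' x -> O x) /\
     (forall x, O' x -> ~ Qset f B e x).
Proof.
  intros O HO HOne.
  destruct (classic (exists x, O x /\ Qset f B e x)) as [[x0 [Ox0 Qx0]]|Hn].
  2:{ exists O; split; auto; split; auto; split; auto. intros x Ox Qx; apply Hn; eauto. }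
  destruct Qx0 as [_ Q2].
  destruct (Q2 (fun _ => True)) as [_ [_ [v0 [_ [_ [_ [Bv0 _]]]]]]].
  { exists (fun _ => True); split; [apply topen_full|]; auto. }
  destruct (H x0) as [_ [D0 [HD0 Hqc0]]].
  destruct (HD0 B HB (ex_intro _ v0 Bv0)) as [y' [By' Dy']].
  destruct (Hqc0 y' Dy' O _ (open_nbhd O x0 HO Ox0) (ball_mnbhd (f (x0,y')) e He))
    as [O1 [HO1 [HO1ne [HO1O HO1W]]]].
  destruct (classic (exists x, O1 x /\ Qset f B e x)) as [[x1 [O1x1 Qx1]]|Hn].
  2:{ exists O1; split; auto; split; auto; split; auto. intros x Ox Qx; apply Hn; eauto. }
  destruct Qx1 as [_ Q12].
  destruct (Q12 O1 (open_nbhd O1 x1 HO1 O1x1)) as [u [u' [v [v' [Hu [Hu' [Bv [Bv' Hbig]]]]]]]].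
  pose proof (HO1W u Hu) as b1; pose proof (HO1W u' Hu') as b2; simpl in b1, b2.
  pose proof (mdist_tri Z (f (u,v)) (f (u,y')) (f (u',v'))) as t1.
  pose proof (mdist_tri Z (f (u,y')) (f (x0,y')) (f (u',v'))) as t2.
  pose proof (mdist_tri Z (f (x0,y')) (f (u',y')) (f (u',v'))) as t3.
  rewrite (mdist_sym Z (f (u,y')) (f (x0,y'))) in t2.
  destruct (Rlt_or_le (5*e) (mdist Z (f (u,v)) (f (u,y')))) as [c|c].
  - destruct (sub_step B e He HB O1 HO1 x0 y' By' HO1W u v Hu Bv c) as [O' [h1 [h2 [h3 h4]]]].
    exists O'; repeat split; auto.
  - assert (c' : mdist Z (f (u',v')) (f (u',y')) > 5*e).
    { rewrite mdist_sym. lra. }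
    destruct (sub_step B e He HB O1 HO1 x0 y' By' HO1W u' v' Hu' Bv' c') as [O' [h1 [h2 [h3 h4]]]].
    exists O'; repeat split; auto.
Qed.
End NW.

Lemma residual_avoid {X : TopSpace} (Qn : nat -> X -> Prop) :
  (forall n O, topen X O -> (exists x, O x) ->
    exists O', topen X O' /\ (exists x, O' x) /\ (forall x, O' x -> O x) /\
     (forall x, O' x -> ~ Qn n x)) ->
  exists R0 : X -> Prop, residual R0 /\ forall x, R0 x -> forall n, ~ Qn n x.
Proof.
  intros Hn.
  set (G := fun n (x : X) => exists A, (topen X A /\ forall z, A z -> ~ Qn n z) /\ A x).
  exists (fun x => forall n, G n x); split.
  - exists G; split; auto. intro n; split.
    + apply topen_union. intros A [h _]; exact h.
    + intros O HO HOne. destruct (Hn n O HO HOne) as [O' [h1 [[x hx] [h3 h4]]]].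
      exists x; split; auto. exists O'; auto.
  - intros x Hx n. destruct (Hx n) as [A [[_ hA] hx]]. auto.
Qed.

Definition optset {Y : Type} (o : option (Y -> Prop)) : Y -> Prop :=
  match o with Some Sb => Sb | None => fun _ => False end.

Lemma main_res {X Y : TopSpace} {Z : MetricSpace} (f : X * Y -> Z)
  (B : (Y -> Prop) -> Prop) (en : nat -> option (Y -> Prop))
  (Hen : forall Sb, B Sb <-> exists n, en n = Some Sb)
  (HBo : forall Sb, B Sb -> topen Y Sb) :
  (forall x : X,
      quasicontinuous (fun y : Y => f (x, y)) /\
      exists D : Y -> Prop, dense D /\
        forall y, D y -> quasicontinuous_at (fun x' : X => f (x', y)) x) ->
  exists R0 : X -> Prop, residual R0 /\ forall x, R0 x ->
    forall Sb j, B Sb ->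
     (forall v v', Sb v -> Sb v' -> mdist Z (f (x,v)) (f (x,v')) < / (INR j + 1)) ->
     exists U, nbhd U x /\ forall u u' v v', U u -> U u' -> Sb v -> Sb v' ->
        mdist Z (f (u,v)) (f (u',v')) <= 12 * / (INR j + 1).
Proof.
  intros H.
  set (Qn := fun m x => Qset f (optset (en (fst (Cantor.of_nat m))))
                             (/ (INR (snd (Cantor.of_nat m)) + 1)) x).
  destruct (residual_avoid Qn) as [R0 [HR HR0]].
  { intros m O HO HOne. apply nowhere; auto.
    - apply Rlt_gt, Rinv_0_lt_compat. pose proof (pos_INR (snd (Cantor.of_nat m))); lra.
    - destruct (en (fst (Cantor.of_nat m))) as [Sb|] eqn:E; simpl.
      + apply HBo, Hen; eauto.
      + apply topen_empty. }
  exists R0; split; auto.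
  intros x Rx Sb j BS Hdiam.
  destruct (proj1 (Hen Sb) BS) as [i Ei].
  pose proof (HR0 x Rx (Cantor.to_nat (i, j))) as NQ.
  unfold Qn in NQ. rewrite Cantor.cancel_of_to in NQ. simpl in NQ. rewrite Ei in NQ.
  simpl in NQ.
  apply NNPP; intro Hno. apply NQ; split; auto.
  intros U HU. apply NNPP; intro Hno2. apply Hno. exists U; split; auto.
  intros u u' v v' h1 h2 h3 h4. apply Rnot_lt_le; intro c. apply Hno2.
  exists u, u', v, v'; repeat split; auto.
Qed.

Lemma pick_j (eps : R) : eps > 0 -> exists j, 13 * / (INR j + 1) < eps.
Proof.
  intros He. destruct (INR_archimed eps 13 He) as [n Hn].
  exists n. pose proof (pos_INR n).
  apply (Rmult_lt_reg_r (INR n + 1)); [lra|].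
  rewrite Rmult_assoc, Rinv_l by lra. nra.
Qed.

Lemma nbhd_pt {X : TopSpace} (U : X -> Prop) x : nbhd U x -> U x.
Proof. intros [O [_ [h1 h2]]]; auto. Qed.

Theorem corollary3p7 (X Y : TopSpace) (Z : MetricSpace) (f : X * Y -> Z) :
  (countable_base Y ->
   (forall x : X,
      continuous (fun y : Y => f (x, y)) /\
      exists D : Y -> Prop, dense D /\
        forall y, D y -> quasicontinuous_at (fun x' : X => f (x', y)) x) ->
   exists R0 : X -> Prop, residual R0 /\
     forall x y, R0 x -> continuous_at2 f (x, y))
  /\
  (countable_pseudobase Y ->
   (forall x : X,
      quasicontinuous (fun y : Y => f (x, y)) /\
      exists D : Y -> Prop, dense D /\
        forall y, D y -> quasicontinuous_at (fun x' : X => f (x', y)) x) ->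
   exists R0 : X -> Prop, residual R0 /\
     forall x y, R0 x -> qc_wrt_x_at f x y).
Proof.
  split.
  - intros [B [[HBo HBb] [en Hen]]] H.
    destruct (main_res f B en Hen HBo) as [R0 [HR HP]].
    { intro x; destruct (H x) as [h1 h2]; split; auto. apply cont_qc; auto. }
    exists R0; split; auto.
    intros x y Rx W [eps [Heps HW]].
    destruct (pick_j eps Heps) as [j Hj].
    assert (HPj := fun x Rx Sb BS => HP x Rx Sb j BS); clear HP.
    set (e := / (INR j + 1)) in *.
    assert (He : e > 0). { unfold e. apply Rlt_gt, Rinv_0_lt_compat. pose proof (pos_INR j); lra. }
    clearbody e.
    destruct (proj1 (H x) y (fun w => mdist Z (f (x,y)) w < e/2)) as [U0 [[O0 [HO0 [HyO0 HO0U]]] HU0]].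
    { apply ball_mnbhd; lra. }
    destruct (HBb O0 y HO0 HyO0) as [Sb [BS [Sy SO0]]].
    destruct (HPj x Rx Sb BS) as [U [HU HUb]].
    { intros v v' hv hv'. pose proof (HU0 v (HO0U v (SO0 v hv))).
      pose proof (HU0 v' (HO0U v' (SO0 v' hv'))). simpl in *.
      pose proof (mdist_tri Z (f (x,v)) (f (x,y)) (f (x,v'))).
      rewrite (mdist_sym Z (f (x,v)) (f (x,y))) in *. lra. }
    exists (fun q => U (fst q) /\ Sb (snd q)); split.
    + exists U, Sb; repeat split; auto. apply open_nbhd; auto.
    + intros [u v] [hu hv]; simpl in *. apply HW.
      pose proof (HUb u x v y hu (nbhd_pt U x HU) hv Sy).
      rewrite mdist_sym. lra.
  - intros [B [[HBo HBb] [en Hen]]] H.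
    destruct (main_res f B en Hen (fun Sb h => proj1 (HBo Sb h)) H) as [R0 [HR HP]].
    exists R0; split; auto.
    intros a b Ra V eps HV Heps.
    destruct (pick_j eps Heps) as [j Hj].
    assert (HPj := fun x Rx Sb BS => HP x Rx Sb j BS); clear HP.
    set (e := / (INR j + 1)) in *.
    assert (He : e > 0). { unfold e. apply Rlt_gt, Rinv_0_lt_compat. pose proof (pos_INR j); lra. }
    clearbody e.
    destruct (proj1 (H a) b V (fun w => mdist Z (f (a,b)) w < e/2) HV) as [O0 [HO0 [HO0ne [HO0V HO0W]]]].
    { apply ball_mnbhd; lra. }
    destruct (HBb O0 HO0 HO0ne) as [Sb [BS SO0]].
    destruct (HBo Sb BS) as [HSo [s0 Ss0]].
    destruct (HPj a Ra Sb BS) as [U [HU HUb]].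
    { intros v v' hv hv'. pose proof (HO0W v (SO0 v hv)).
      pose proof (HO0W v' (SO0 v' hv')). simpl in *.
      pose proof (mdist_tri Z (f (a,v)) (f (a,b)) (f (a,v'))).
      rewrite (mdist_sym Z (f (a,v)) (f (a,b))) in *. lra. }
    exists U, Sb; repeat split; auto.
    + exists s0; auto.
    + intros x y hx hy.
      pose proof (HUb a x s0 y (nbhd_pt U a HU) hx Ss0 hy).
      pose proof (HO0W s0 (SO0 s0 Ss0)). simpl in *.
      pose proof (mdist_tri Z (f (a,b)) (f (a,s0)) (f (x,y))).
      lra.
Qed.
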